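(* Let $\Delta$ be a finite, flag, simply connected simplicial complex, with $\mathcal{P}_H$, $q$, $T$, $p_n$, $L$ and $\Phi_n$ as in the context. Then for all $e\in\mathrm{Edge}(\Delta)$ and all $n\in\mathbb{Z}$, $\mathrm{Area}_{\mathcal{P}_H}\big(\Phi_n(e\overline{e})\big)\le(2L+1)|n|+1$.
   Context: $\mathrm{Edge}(\Delta)$ is the set of directed edges of $\Delta$; for $e$ in it, $\iota e$, $\tau e$ are its initial and terminal vertices and $\overline{e}$ is the reversed edge. $e_1\cdot\ldots\cdot e_l$ is a combinatorial path if $\tau e_i=\iota e_{i+1}$, and a combinatorial 1-cycle if also $\tau e_l=\iota e_1$. $\mathcal{P}_H=\langle\mathrm{Edge}(\Delta)\mid\mathcal{R}_H\rangle$ where $\mathcal{R}_H$ consists of the words $e\overline{e}$ ($e\in\mathrm{Edge}(\Delta)$) and $efg$, $e^{-1}f^{-1}g^{-1}$ for every combinatorial 1-cycle $e\cdot f\cdot g$ (a finite presentation of the Bestvina–Brady group $H_\Delta$). For a word $w$ over $\mathrm{Edge}(\Delta)^{\pm1}$ representing the identity, $\mathrm{Area}_{\mathcal{P}_H}(w)$ is the least $m$ such that $w$ is freely equal to $\prod_{i=1}^m x_ir_ix_i^{-1}$ with $r_i\in\mathcal{R}_H^{\pm1}$. For a letter $e$ and $m\in\mathbb{Z}$, $e^m$ denotes the word of $m$ copies of $e$ if $m\ge0$ and $|m|$ copies of $e^{-1}$ if $m<0$. Fix a vertex $q$ and a spanning tree $T$ of the 1-skeleton of $\Delta$; $p_n(u,v)=e_1^n\cdots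 e_l^n$ where $e_1\cdot\ldots\cdot e_l$ is the unique geodesic combinatorial path in $T$ from $u$ to $v$. $L$ is the maximum, over pairs of vertices $u,v$, of the edge-path distance between $u$ and $v$ in $T$. For $n\in\mathbb{Z}$, $\Phi_n$ is the endomorphism of the free monoid on $\mathrm{Edge}(\Delta)^{\pm1}$ given by $\Phi_n(e)=p_n(q,\iota e)\,e^{n+1}\,p_n(\tau e,q)$ and $\Phi_n(e^{-1})=\Phi_n(e)^{-1}$ (formal inverse word). *)

(* Defs.v *)
From Stdlib Require Import Relation_Operators.
From mathcomp Require Import all_boot all_order all_algebra.
Set Implicit Arguments. Unset Strict Implicit. Unset Printing Implicit Defensive.

Definition is_simplicial_complex (V : finType) (D : {set {set V}}) : Prop :=
  [/\ (forall s : {set V}, s \in D -> s != set0),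
      (forall s t : {set V}, s \in D -> t \subset s -> t != set0 -> t \in D) &
      (forall v : V, [set v] \in D)].

Definition is_flag (V : finType) (D : {set {set V}}) : Prop :=
  forall s : {set V}, s != set0 ->
    (forall x y, x \in s -> y \in s -> x != y -> [set x; y] \in D) -> s \in D.

Definition is_edge (V : finType) (D : {set {set V}}) (e : V * V) : bool :=
  (e.1 != e.2) && ([set e.1; e.2] \in D).

Definition Edge (V : finType) (D : {set {set V}}) := {e : V * V | is_edge D e}.

Definition iota_e (V : finType) (D : {set {set V}}) (e : Edge D) : V := (sval e).1.
Definition tau_e (V : finType) (D : {set {set V}}) (e : Edge D) : V := (sval e).2.

Lemma is_edge_rev (V : finType) (D : {set {set V}}) (e : V * V) :
  is_edge D e -> is_edge D (e.2, e.1).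
Proof. by rewrite /is_edge /= eq_sym setUC. Qed.

Definition ebar (V : finType) (D : {set {set V}}) (e : Edge D) : Edge D :=
  exist _ ((sval e).2, (sval e).1) (is_edge_rev (proj2_sig e)).

Fixpoint epath (V : finType) (D : {set {set V}}) (P : Edge D -> bool)
    (u v : V) (p : seq (Edge D)) : Prop :=
  match p with
  | [::] => u = v
  | e :: p' => [/\ P e, iota_e e = u & epath P (tau_e e) v p']
  end.

Definition ep_step (V : finType) (D : {set {set V}}) (p p' : seq (Edge D)) : Prop :=
  (exists a b (e : Edge D), p = a ++ e :: ebar e :: b /\ p' = a ++ b) \/
  (exists a b (e f g : Edge D),
      [/\ tau_e e = iota_e f, iota_e g = iota_e e, tau_e g = tau_e f,
          [set iota_e e; tau_e e; tau_e f] \in D &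
          p = a ++ e :: f :: b /\ p' = a ++ g :: b]).

Definition simply_connected (V : finType) (D : {set {set V}}) : Prop :=
  [/\ exists v : V, True,
      (forall u v : V, exists p, epath (fun _ : Edge D => true) u v p) &
      (forall (v : V) p, epath (fun _ : Edge D => true) v v p ->
         clos_refl_sym_trans _ (@ep_step V D) p [::])].

Definition in_tree (V : finType) (D : {set {set V}}) (T : {set {set V}})
  (e : Edge D) : bool := [set iota_e e; tau_e e] \in T.

Definition is_spanning_tree (V : finType) (D : {set {set V}}) (T : {set {set V}})
  : Prop :=
  [/\ (forall t, t \in T -> (t \in D) && (#|t| == 2)),
      (forall u v : V, exists p : seq (Edge D), epath (in_tree T) u v p) &
      ~ (exists s : seq V, [/\ 3 <= size s, uniq s &
            cycle (fun x y => [set x; y] \in T) s])].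

Definition is_Tgeodesic (V : finType) (D : {set {set V}}) (T : {set {set V}})
  (u v : V) (p : seq (Edge D)) : Prop :=
  epath (in_tree T) u v p /\
  forall p' : seq (Edge D), epath (in_tree T) u v p' -> size p <= size p'.

Definition Lmax (V : finType) (D : {set {set V}}) (gp : V -> V -> seq (Edge D)) : nat :=
  \max_(u : V) \max_(w : V) size (gp u w).

Definition letter (V : finType) (D : {set {set V}}) := (Edge D * bool)%type.
(* (e, true) is the letter e, (e, false) is e^{-1} *)
Definition word (V : finType) (D : {set {set V}}) := seq (letter D).

Definition linv (V : finType) (D : {set {set V}}) (x : letter D) : letter D :=
  (x.1, ~~ x.2).
Definition winv (V : finType) (D : {set {set V}}) (w : word D) : word D :=
  rev (map (@linv V D) w).

Definition free_step (V : finType) (D : {set {set V}}) (u v : word D) : Prop :=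
  exists a b (x : letter D), u = a ++ x :: linv x :: b /\ v = a ++ b.

Definition freely_eq (V : finType) (D : {set {set V}}) : word D -> word D -> Prop :=
  clos_refl_sym_trans _ (@free_step V D).

Definition is_relator (V : finType) (D : {set {set V}}) (r : word D) : Prop :=
  (exists e : Edge D, r = [:: (e, true); (ebar e, true)]) \/
  (exists e f g : Edge D,
     [/\ tau_e e = iota_e f, tau_e f = iota_e g, tau_e g = iota_e e &
         (r = [:: (e, true); (f, true); (g, true)] \/
          r = [:: (e, false); (f, false); (g, false)])]).

Definition is_relator_pm (V : finType) (D : {set {set V}}) (r : word D) : Prop :=
  is_relator r \/ is_relator (winv r).

Definition vk_decomp (V : finType) (D : {set {set V}}) (w : word D) (m : nat) : Prop :=
  exists cs : seq (word D * word D),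
    [/\ size cs = m,
        (forall i, i < size cs -> is_relator_pm (nth ([::], [::]) cs i).2) &
        freely_eq w (flatten [seq c.1 ++ c.2 ++ winv c.1 | c <- cs])].

(* Area_{P_H}(w) <= k  (Area is the least m with vk_decomp w m) *)
Definition area_le (V : finType) (D : {set {set V}}) (w : word D) (k : nat) : Prop :=
  exists m, m <= k /\ vk_decomp w m.

Definition lpow (V : finType) (D : {set {set V}}) (x : letter D) (m : int) : word D :=
  match m with
  | Posz k => nseq k x
  | Negz k => nseq k.+1 (linv x)
  end.

Definition pn (V : finType) (D : {set {set V}}) (gp : V -> V -> seq (Edge D))
  (n : int) (u v : V) : word D :=
  flatten [seq lpow (e, true) n | e <- gp u v].

Definition Phi_letter (V : finType) (D : {set {set V}}) (gp : V -> V -> seq (Edge D))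
  (q : V) (n : int) (x : letter D) : word D :=
  let w := pn gp n q (iota_e x.1) ++ lpow (x.1, true) (n + 1)%R
           ++ pn gp n (tau_e x.1) q in
  if x.2 then w else winv w.

Definition Phi (V : finType) (D : {set {set V}}) (gp : V -> V -> seq (Edge D))
  (q : V) (n : int) (w : word D) : word D :=
  flatten [seq Phi_letter gp q n x | x <- w].

(* Main.v *)
Require Import Defs.
From Stdlib Require Import Relation_Operators.
From mathcomp Require Import all_boot all_order all_algebra zify.
Set Implicit Arguments. Unset Strict Implicit. Unset Printing Implicit Defensive.

Section Free.
Variables (V : finType) (D : {set {set V}}).
Implicit Types (u v w x y : word D).

Lemma linvK (a : letter D) : linv (linv a) = a.
Proof. by case: a => a b; rewrite /linv /= negbK. Qed.

Lemma winv_cat x y : winv (x ++ y) = winv y ++ winv x.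
Proof. by rewrite /winv map_cat rev_cat. Qed.

Lemma winv_cons a x : winv (a :: x) = winv x ++ [:: linv a].
Proof. by rewrite /winv /= rev_cons cats1. Qed.

Lemma fe_refl u : freely_eq u u.
Proof. exact: rst_refl. Qed.
Lemma fe_sym u v : freely_eq u v -> freely_eq v u.
Proof. exact: rst_sym. Qed.
Lemma fe_trans u v w : freely_eq u v -> freely_eq v w -> freely_eq u w.
Proof. exact: rst_trans. Qed.

Lemma fe_congr x y u v : freely_eq u v -> freely_eq (x ++ u ++ y) (x ++ v ++ y).
Proof.
elim=> [u' v' [a [b [c [-> ->]]]]| u'| u' v' _ IH| u' v' w' _ IH1 _ IH2].
- apply: rst_step; exists (x ++ a), (b ++ y), c.
  by rewrite -!catA /=.
- exact: fe_refl.
- exact: fe_sym.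
- exact: fe_trans IH1 IH2.
Qed.

Lemma fe_cat u u' v v' : freely_eq u u' -> freely_eq v v' -> freely_eq (u ++ v) (u' ++ v').
Proof.
move=> H1 H2; apply: (@fe_trans _ (u' ++ v)).
  by have := fe_congr [::] v H1; rewrite /=.
by have := fe_congr u' [::] H2; rewrite /= !cats0.
Qed.

Lemma fe_cancel_l x a b : freely_eq (a ++ winv x ++ x ++ b) (a ++ b).
Proof.
elim: x a b => [|c x IH] a b; first exact: fe_refl.
rewrite winv_cons -catA /=.
apply: (@fe_trans _ (a ++ winv x ++ x ++ b)); last exact: IH.
rewrite catA; apply: rst_step; exists (a ++ winv x), (x ++ b), (linv c).
by rewrite linvK -!catA.
Qed.

Lemma fe_cancel_r x a b : freely_eq (a ++ x ++ winv x ++ b) (a ++ b).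
Proof.
elim: x a b => [|c x IH] a b; first exact: fe_refl.
rewrite winv_cons /=.
apply: (@fe_trans _ (a ++ c :: linv c :: b)).
  have := IH (a ++ [:: c]) (linv c :: b).
  by rewrite -!catA /=.
by apply: rst_step; exists a, b, c.
Qed.

Definition FF (cs : seq (word D * word D)) :=
  flatten [seq c.1 ++ c.2 ++ winv c.1 | c <- cs].

Lemma fe_conj x cs :
  freely_eq (x ++ FF cs ++ winv x) (FF [seq (x ++ c.1, c.2) | c <- cs]).
Proof.
have E : forall c cs, FF (c :: cs) = (c.1 ++ c.2 ++ winv c.1) ++ FF cs by [].
elim: cs => [|c cs IH].
  by rewrite /FF /=; have := fe_cancel_r x [::] [::]; rewrite /= cats0.
rewrite map_cons !E /= winv_cat.
apply: fe_sym; apply: (@fe_trans _ ((x ++ c.1 ++ c.2 ++ winv c.1 ++ winv x) ++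
    (x ++ FF cs ++ winv x))).
  rewrite -!catA; have := fe_congr (x ++ c.1 ++ c.2 ++ winv c.1 ++ winv x) [::]
    (fe_sym IH); rewrite !cats0 -!catA => H; exact: H.
have := fe_cancel_l x (x ++ c.1 ++ c.2 ++ winv c.1) (FF cs ++ winv x).
rewrite -!catA => H; exact: H.
Qed.

Lemma vk_conj w m x : vk_decomp w m -> vk_decomp (x ++ w ++ winv x) m.
Proof.
case=> cs [Hs Hr Hf]; exists [seq (x ++ c.1, c.2) | c <- cs]; split.
- by rewrite size_map.
- move=> i; rewrite size_map => Hi.
  rewrite (nth_map ([::], [::])) //=; exact: Hr.
- apply: fe_trans (fe_conj x cs).
  by have := fe_congr x (winv x) Hf.
Qed.

Lemma vk_cat w1 w2 m1 m2 : vk_decomp w1 m1 -> vk_decomp w2 m2 ->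
  vk_decomp (w1 ++ w2) (m1 + m2).
Proof.
case=> cs1 [Hs1 Hr1 Hf1] [cs2 [Hs2 Hr2 Hf2]]; exists (cs1 ++ cs2); split.
- by rewrite size_cat Hs1 Hs2.
- move=> i; rewrite size_cat nth_cat => Hi; case: ifP => Hi1; first exact: Hr1.
  apply: Hr2; move/negbT: Hi1; rewrite -leqNgt => Hi1; by rewrite ltn_subLR.
- by rewrite map_cat flatten_cat; exact: fe_cat.
Qed.

Lemma vk_fe w w' m : freely_eq w w' -> vk_decomp w' m -> vk_decomp w m.
Proof. move=> H [cs [H1 H2 H3]]; exists cs; split => //; exact: fe_trans H3. Qed.

Lemma vk_insert x w y m1 m2 : vk_decomp w m1 -> vk_decomp (x ++ y) m2 ->
  vk_decomp (x ++ w ++ y) (m1 + m2).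
Proof.
move=> H1 H2; apply: (vk_fe (w' := (x ++ w ++ winv x) ++ (x ++ y))).
  apply: fe_sym; have := fe_cancel_l x (x ++ w) y; by rewrite -!catA.
by apply: vk_cat => //; exact: vk_conj.
Qed.

Lemma vk_rel (r : word D) : is_relator_pm r -> vk_decomp r 1.
Proof.
move=> H; exists [:: ([::], r)]; split => //.
- by case=> //.
- by rewrite /= /winv /= !cats0; exact: fe_refl.
Qed.

Lemma vk_nil : @vk_decomp V D [::] 0.
Proof. by exists [::]; split => //; exact: fe_refl. Qed.

End Free.
Section Tree.
Variables (V : finType) (D : {set {set V}}).

Lemma ebarK (e : Edge D) : ebar (ebar e) = e.
Proof. by apply: val_inj; rewrite /=; case: (sval e). Qed.

Lemma edge_neq (e : Edge D) : iota_e e != tau_e e.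
Proof. by case/andP: (proj2_sig e). Qed.

Lemma epath_cat (P : Edge D -> bool) u v a b :
  epath P u v (a ++ b) <-> exists w, epath P u w a /\ epath P w v b.
Proof.
elim: a u => [|g a IH] u /=.
  by split; [move=> H; exists u | case=> w [-> H]].
split.
  case=> Hg Hu /IH [w [H1 H2]]; exists w; split => //.
case=> w [[Hg Hu H1] H2]; split => //; apply/IH; by exists w.
Qed.

Lemma epath_rcons (P : Edge D -> bool) u v p f :
  epath P u v (rcons p f) <-> [/\ epath P u (iota_e f) p, P f & tau_e f = v].
Proof.
rewrite -cats1 epath_cat; split.
  by case=> w [H1 /= [Hf Hw ->]]; rewrite Hw.
by case=> H1 Hf Hv; exists (iota_e f); split => //=.
Qed.

Lemma epath_last (P : Edge D -> bool) u v p :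
  epath P u v p -> last u (map (@tau_e V D) p) = v.
Proof. by elim: p u => [|g p IH] u /=; [|case=> _ _ /IH]. Qed.

Definition nbrel := fun g h : Edge D => h != ebar g.
Definition nb (p : seq (Edge D)) := sorted nbrel p.

Lemma nb_rcons (s : seq (Edge D)) x : nb (rcons s x) ->
  nb s /\ forall y, s != [::] -> nbrel (last y s) x.
Proof.
case: s => [|z s] //= ; rewrite rcons_path => /andP [H1 H2]; by split.
Qed.

Lemma geod_nb (P : Edge D -> bool) u v p : epath P u v p ->
  (forall p', epath P u v p' -> size p <= size p') -> nb p.
Proof.
elim: p u => [|g p IH] u //= [Hg Hu Hp] Hmin.
case: p IH Hp Hmin => [|h p] IH Hp Hmin //=.
apply/andP; split.
  apply/negP => /eqP Eh.
  case: Hp => Hh Hi Hp.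
  have : epath P u v p by rewrite -Hu; rewrite Eh in Hp; exact: Hp.
  move/Hmin => /=; lia.
apply: (IH (tau_e g)) => // p' Hp'.
have := Hmin (g :: p'); rewrite /= ltnS; apply; by split.
Qed.

Lemma epath_rev (T : {set {set V}}) u v p :
  epath (in_tree T) u v p -> epath (in_tree T) v u (rev (map (@ebar V D) p)).
Proof.
elim: p u => [|g p IH] u /=; first by move->.
case=> Hg Hu /IH Hp; rewrite rev_cons; apply/epath_rcons; split => //.
by rewrite /in_tree /iota_e /tau_e /= setUC.
Qed.

Lemma nb_rev p : nb p -> nb (rev (map (@ebar V D) p)).
Proof.
rewrite /nb rev_sorted sorted_map; apply: sub_sorted => x y.
by rewrite /nbrel /= ebarK eq_sym.
Qed.

Variable T : {set {set V}}.
Hypothesis Hac : ~ (exists s : seq V, [/\ 3 <= size s, uniq s &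
            cycle (fun x y => [set x; y] \in T) s]).
Definition rT := fun x y : V => [set x; y] \in T.

Lemma epath_path u v p : epath (in_tree T) u v p -> path rT u (map (@tau_e V D) p).
Proof.
elim: p u => [|g p IH] u //= [Hg Hu /IH ->]; rewrite andbT.
by rewrite -Hu.
Qed.

Lemma nb_uniq p u v : epath (in_tree T) u v p -> nb p ->
  uniq (u :: map (@tau_e V D) p).
Proof.
elim/last_ind: p v => [|p0 f IH] v //.
move=> /epath_rcons [Hp0 Hf Hv] /nb_rcons [Hnb0 Hlast].
rewrite map_rcons -rcons_cons rcons_uniq (IH _ Hp0 Hnb0) andbT.
set vs0 := u :: map (@tau_e V D) p0.
apply/negP => Hin.
set i := index (tau_e f) vs0.
have Hi : i < size vs0 by rewrite index_mem.
have Hdrop := drop_nth (tau_e f) Hi.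
rewrite nth_index // in Hdrop.
set s' := drop i.+1 vs0 in Hdrop.
have Hsort : sorted rT (tau_e f :: s').
  rewrite -Hdrop; apply: drop_sorted; exact: epath_path Hp0.
have Hun : uniq (tau_e f :: s').
  rewrite -Hdrop; apply: drop_uniq; exact: (IH _ Hp0 Hnb0).
have Hl : last (tau_e f) s' = iota_e f.
  have := epath_last Hp0.
  have -> : last u (map (@tau_e V D) p0) = last u vs0 by [].
  by rewrite -(cat_take_drop i vs0) Hdrop last_cat.
have Hcyc : cycle rT (tau_e f :: s').
  by rewrite /cycle rcons_path; apply/andP; split => //; rewrite Hl.
case: s' Hdrop Hsort Hun Hl Hcyc => [|y [|z s'']] Hdrop Hsort Hun Hl Hcyc.
- by move: (edge_neq f); rewrite -Hl eqxx.
- (* backtrack *)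
  rewrite /= in Hl.
  case/lastP: p0 @vs0 IH Hp0 Hnb0 Hlast Hin i Hi Hdrop Hsort Hun Hcyc
    => [|p1 g] vs0 IH Hp0 Hnb0 Hlast Hin i Hi Hdrop Hsort Hun Hcyc.
    have := congr1 size Hdrop; rewrite size_drop /vs0 /=; lia.
  move: Hp0 => /epath_rcons [Hp1 Hg Hgf].
  have E1 : vs0 = rcons (u :: map (@tau_e V D) p1) (tau_e g)
    by rewrite /vs0 map_rcons.
  have E2 : vs0 = rcons (rcons (take i vs0) (tau_e f)) y.
    by rewrite -{1}(cat_take_drop i vs0) Hdrop -!cats1 -catA.
  rewrite {1}E1 in E2; case/rcons_inj: E2 => E3 _.
  have E4 : iota_e g = tau_e f.
    have := epath_last Hp1; rewrite (_ : last u _ = last u (u :: map (@tau_e V D) p1)) //.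
    by rewrite E3 last_rcons => ->.
  have Efg : f = ebar g.
    apply: val_inj; rewrite /=.
    move: Hgf E4; rewrite /iota_e /tau_e => -> ->.
    by case: (sval f).
  have Hne : rcons p1 g != [::] by case: (p1).
  by move: (Hlast g Hne); rewrite last_rcons /nbrel -Efg eqxx.
- apply: Hac; exists [:: tau_e f, y, z & s'']; split => //.
Qed.

Lemma no_closed u p : epath (in_tree T) u u p -> nb p -> p = [::].
Proof.
move=> Hp Hnb; have := nb_uniq Hp Hnb.
case: p Hp {Hnb} => [|g p] // Hp.
have := epath_last Hp; rewrite /= => Hl.
have : u \in tau_e g :: map (@tau_e V D) p by rewrite -{1}Hl mem_last.
by move=> -> .
Qed.

Lemma nb_catr (s : seq (Edge D)) x y t : nb (rcons s x) -> nb (y :: t) -> nbrel x y ->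
  nb (rcons s x ++ y :: t).
Proof.
rewrite /nb cat_rcons; case: s => [|z s] /=.
  by move=> _ H1 H2; rewrite H1 H2.
rewrite rcons_path cat_path => /andP [-> Hx] Ht Hxy /=.
by rewrite Hx Hxy.
Qed.

Lemma tree_unique p u v p' : epath (in_tree T) u v p -> epath (in_tree T) u v p' ->
  nb p -> nb p' -> p = p'.
Proof.
elim: p u p' => [|e a IH] u p' Hp Hp' Hnb Hnb'.
  by move: Hp => /= Huv; subst v; rewrite (no_closed Hp' Hnb').
case: p' Hp' Hnb' => [|e' a'] Hp' Hnb'.
  by move: Hp' => /= Huv; subst v; rewrite (no_closed Hp Hnb).
case: (eqVneq e e') => [Ee|Hne]; first subst e'.
  move: Hp Hp' Hnb Hnb' => /= [_ _ Ha] [_ _ Ha'] Hnb Hnb'.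
  congr (_ :: _); apply: (IH _ _ Ha Ha').
  - by case: (a) Hnb => //= x s /andP [].
  - by case: (a') Hnb' => //= x s /andP [].
exfalso.
set W := rev (map (@ebar V D) (e' :: a')) ++ e :: a.
have HW : epath (in_tree T) v v W.
  apply/epath_cat; exists u; split; first exact: epath_rev.
  exact: Hp.
have HnbW : nb W.
  rewrite /W /= rev_cons; apply: nb_catr => //.
    by have := nb_rev Hnb'; rewrite /= rev_cons.
by have := no_closed HW HnbW; rewrite /W /= rev_cons; case: (rev _).
Qed.

End Tree.

Section Area.
Variables (V : finType) (D : {set {set V}}).

Definition Wd (n : int) (p : seq (Edge D)) : word D :=
  flatten [seq lpow (f, true) n | f <- p].

Lemma nseqSr (A : Type) k (a : A) : nseq k.+1 a = nseq k a ++ [:: a].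
Proof. by elim: k => //= k <-. Qed.

Lemma vk_nseq (a b : letter D) j : is_relator_pm [:: a; b] ->
  vk_decomp (nseq j a ++ nseq j b) j.
Proof.
move=> Hr; elim: j => [|j IH]; first exact: vk_nil.
rewrite (nseqSr j b) /=.
have := vk_insert (x := [:: a]) (y := [:: b]) IH (vk_rel Hr).
by rewrite addn1 /= -!catA.
Qed.

Lemma vk_pow (f : Edge D) m :
  vk_decomp (lpow (f, true) m ++ lpow (ebar f, true) m) `|m|.
Proof.
case: m => k /=; apply: vk_nseq.
  by left; left; exists f.
right; left; exists (ebar f); by rewrite /winv /= ebarK.
Qed.

Lemma rev_ebarK (p : seq (Edge D)) : rev (map (@ebar V D) (rev (map (@ebar V D) p))) = p.
Proof. by rewrite map_rev revK -map_comp (eq_map (@ebarK V D)) map_id. Qed.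

Lemma vk_Wd n (p : seq (Edge D)) :
  vk_decomp (Wd n p ++ Wd n (rev (map (@ebar V D) p))) (`|n| * size p).
Proof.
elim: p => [|f p IH]; first by rewrite muln0; exact: vk_nil.
have E1 : Wd n (f :: p) = lpow (f, true) n ++ Wd n p by [].
have E2 : Wd n (rev (map (@ebar V D) (f :: p))) =
   Wd n (rev (map (@ebar V D) p)) ++ lpow (ebar f, true) n.
  by rewrite /Wd /= rev_cons map_rcons flatten_rcons.
rewrite E1 E2 /= mulnS addnC -!catA.
have := vk_insert (x := lpow (f, true) n) (y := lpow (ebar f, true) n) IH (vk_pow f n).
by rewrite -!catA.
Qed.

End Area.

Theorem lemma4p2 (V : finType) (D : {set {set V}}) (T : {set {set V}}) (q : V)
  (gp : V -> V -> seq (Edge D)) :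
  is_simplicial_complex D -> is_flag D -> simply_connected D ->
  is_spanning_tree D T ->
  (forall u v : V, is_Tgeodesic T u v (gp u v)) ->
  forall (e : Edge D) (n : int),
    area_le (Phi gp q n [:: (e, true); (ebar e, true)])
            ((2 * Lmax gp + 1) * `|n|%N + 1).
Proof.
move=> _ _ _ [_ _ Hac] Hgeo e n.
have Hnb : forall x y, nb (gp x y).
  by move=> x y; case: (Hgeo x y) => H1 H2; exact: geod_nb H1 H2.
have Hrev : forall x y, gp y x = rev (map (@ebar V D) (gp x y)).
  move=> x y; apply: (tree_unique Hac (Hgeo y x).1).
  - exact: epath_rev (Hgeo x y).1.
  - exact: Hnb.
  - exact: nb_rev.
have HL : forall x y, size (gp x y) <= Lmax gp.
  move=> x y; rewrite /Lmax.
  have H1 := @leq_bigmax V (fun w => size (gp x w)) y.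
  have H2 := @leq_bigmax V (fun u => \max_w size (gp u w)) x.
  exact: leq_trans H1 H2.
set P := gp (tau_e e) q; set Q := gp (iota_e e) q.
have -> : Phi gp q n [:: (e, true); (ebar e, true)] =
  Wd n (rev (map (@ebar V D) Q)) ++
  (lpow (e, true) (n + 1) ++ (Wd n P ++ Wd n (rev (map (@ebar V D) P))) ++
   lpow (ebar e, true) (n + 1)) ++ Wd n Q.
  rewrite /Phi /= /Phi_letter /= /pn -!Hrev cats0 -!catA /Wd /P /Q.
  done.
have H1 := vk_insert (x := lpow (e, true) (n + 1)) (y := lpow (ebar e, true) (n + 1))
   (vk_Wd n P) (vk_pow e (n + 1)).
have H2 := vk_Wd n (rev (map (@ebar V D) Q)); rewrite rev_ebarK in H2.
have H3 := vk_insert H1 H2.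
eexists; split; last exact: H3.
rewrite size_rev size_map.
have HP := HL (tau_e e) q; have HQ := HL (iota_e e) q.
rewrite -/P in HP; rewrite -/Q in HQ.
have HPn : `|n| * size P <= `|n| * Lmax gp by rewrite leq_mul2l HP orbT.
have HQn : `|n| * size Q <= `|n| * Lmax gp by rewrite leq_mul2l HQ orbT.
have Hn1 : `|(n + 1)%R|%N <= `|n|%N + 1 by lia.
lia.
Qed.
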